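(* Let $p$ be a prime and $g$ a generator of $U(\mathbb Z/p\mathbb Z)$. Let $\beta_1,\beta_2$ be real numbers with $\beta_1\ge\beta_2\ge 0$, and let $\varphi=\cos\frac{2\pi}{p-1}+i\sin\frac{2\pi}{p-1}$. Then there exists a nonnegative $g$-circulant matrix $A$ of order $p$ whose eigenvalues are $\beta_1,\beta_2,\beta_2\varphi,\beta_2\varphi^2,\dots,\beta_2\varphi^{p-2}$.
   Context: A $g$-circulant matrix of order $p$ is a matrix $g\text{-}circ(a_1,\dots,a_p)$ whose $(i,j)$ entry is $a_{j-(i-1)g}$ (subscripts modulo $p$ in $\{1,\dots,p\}$), i.e. each row is the preceding row cyclically shifted $g$ places to the right. *)

(* Defs.v *)
From HB Require Import structures.
From mathcomp Require Import all_boot all_order all_algebra all_fingroup all_solvable.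
From mathcomp Require Import complex.
From mathcomp Require Import all_classical all_reals all_analysis.
Set Implicit Arguments. Unset Strict Implicit. Unset Printing Implicit Defensive.
Import Order.TTheory GRing.Theory Num.Theory.
Local Open Scope ring_scope.

(* g-circulant matrix g-circ(a_1,...,a_p) of order p, 0-indexed:
   the (i,j) entry (i,j in {0,...,p-1}) is a_{(j - i*g) mod p}, i.e. row i
   is row i-1 shifted cyclically g places to the right.  The sequence
   a is given as a function nat -> R of which only a 0, ..., a (p-1) are used. *)
Definition gcirc (R : Type) (p g : nat) (a : nat -> R) : 'M[R]_p :=
  \matrix_(i < p, j < p) a ((j + (p - (i * g) %% p)) %% p)%N.

(* Main.v *)
Require Import Defs.
From HB Require Import structures.
From mathcomp Require Import all_boot all_order all_algebra all_fingroup all_solvable.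
From mathcomp Require Import complex.
From mathcomp Require Import all_classical all_reals all_analysis.
From mathcomp Require Import ring lra zify.
Import Order.TTheory GRing.Theory Num.Theory.
Local Open Scope ring_scope.

Lemma sim_char (F : fieldType) m (S A B : 'M[F]_m) :
  S \in unitmx -> S *m A = B *m S -> char_poly A = char_poly B.
Proof.
move=> Su e.
have e2 : map_mx polyC S *m char_poly_mx A = char_poly_mx B *m map_mx polyC S.
  rewrite /char_poly_mx mulmxBr mulmxBl -!map_mxM e.
  by rewrite mul_mx_scalar mul_scalar_mx.
have := congr1 determinant e2; rewrite !det_mulmx det_map_mx /char_poly => e3.
apply: (@mulfI _ (\det S)%:P); last by rewrite e3 mulrC.
by rewrite polyC_eq0 -unitfE -unitmxE.
Qed.

Lemma char_col0 (F : comNzRingType) m (M : 'M[F]_m.+1) b :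
  (forall i, M i ord0 = (i == ord0)%:R * b) ->
  char_poly M = ('X - b%:P) * char_poly (row' ord0 (col' ord0 M)).
Proof.
move=> hM; rewrite /char_poly (expand_det_col _ ord0) big_ord_recl big1 ?addr0.
  by rewrite /cofactor row'_col'_char_poly_mx !mxE hM eqxx mul1r /= expr0 mul1r.
move=> i _; rewrite !mxE hM /= mulr0n !mul0r polyC0 subr0 mul0r //.
Qed.

Lemma companion_gen (R : comNzRingType) (q : {poly R}) d (B : 'M[R]_d) :
  q \is monic -> d = (size q).-1 ->
  (forall i j : 'I_d, B i j = if (i == d.-1 :> nat) then - q`_j else (i.+1 == j :> nat)%:R) ->
  char_poly B = q.
Proof.
move=> mq ed hB; subst d.
have -> : B = companionmx q by apply/matrixP => i j; rewrite hB !mxE.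
exact: companionmxK.
Qed.

Definition cycmx (F : nzRingType) n : 'M[F]_n :=
  \matrix_(i, j) ((j == (i.+1 %% n)%N :> nat)%:R).

Lemma char_cyc (F : fieldType) m (b : F) :
  char_poly (b *: cycmx F m.+1) = 'X^(m.+1) - (b ^+ m.+1)%:P.
Proof.
have [->|b0] := eqVneq b 0.
  rewrite scale0r char_poly_trig; last by apply/is_trig_mxP => i j _; rewrite mxE.
  rewrite expr0n /= subr0.
  under eq_bigr do rewrite mxE subr0.
  by rewrite prodr_const card_ord.
pose D : 'M[F]_m.+1 := diag_mx (\row_(i < m.+1) b ^+ i).
have Du : D \in unitmx.
  rewrite unitmxE det_diag unitfE; apply/prodf_neq0 => i _.
  by rewrite mxE expf_neq0.
pose B : 'M[F]_m.+1 := \matrix_(i, j) if (i == m :> nat) then b ^+ m.+1 * (j == 0 :> nat)%:R else (i.+1 == j :> nat)%:R.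
have cB : char_poly B = 'X^(m.+1) - (b ^+ m.+1)%:P.
  apply: companion_gen; first by rewrite monicXnsubC.
    by rewrite size_XnsubC.
  move=> i j; rewrite mxE /=; case: ifP => // _.
  rewrite coefB coefXn coefC (ltn_eqF (ltn_ord j)) sub0r opprK mulrC.
  by case: eqP; rewrite ?mul1r ?mul0r.
rewrite -cB. apply: (@sim_char F m.+1 D (b *: cycmx F m.+1) B Du).
rewrite mul_diag_mx mul_mx_diag; apply/matrixP => i j; rewrite !mxE.
have [im|im] := eqVneq (i : nat) m.
  rewrite im modnn; case: eqP => [->|_]; last by rewrite !mulr0 mul0r.
  by rewrite !mulr1 exprSr.
rewrite modn_small; last by have := ltn_ord i; rewrite ltnS leq_eqVlt (negPf im).
rewrite [(_ == _.+1)]eq_sym; case: eqP => [<-|_]; last by rewrite !mulr0 mul0r.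
by rewrite mulr1 mul1r exprSr.
Qed.

Lemma prod_root (C : fieldType) n (z c : C) : n.-primitive_root z ->
  \prod_(k < n) ('X - (c * z ^+ k)%:P) = 'X^n - (c ^+ n)%:P.
Proof.
move=> pz; have n0 := prim_order_gt0 pz.
have [->|c0] := eqVneq c 0.
  rewrite expr0n gtn_eqF // subr0.
  under eq_bigr do rewrite mul0r subr0.
  by rewrite prodr_const card_ord.
pose rs := [seq c * z ^+ k | k <- index_iota 0 n].
have := @all_roots_prod_XsubC _ ('X^n - (c ^+ n)%:P) rs.
rewrite size_XnsubC // size_map size_iota subn0 => /(_ erefl).
rewrite (monicP (monicXnsubC _ n0)) scale1r big_map big_mkord => <- //.
  apply/allP => x /mapP [k _ ->]; rewrite /root !hornerE exprMn -exprM mulnC exprM.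
  by rewrite (prim_expr_order pz) expr1n mulr1 subrr.
rewrite uniq_rootsE map_inj_in_uniq ?iota_uniq // => k l.
rewrite !mem_index_iota => /andP[_ kn] /andP[_ ln] /(mulfI c0) /eqP.
by rewrite (eq_prim_root_expr pz) !modn_small // => /eqP.
Qed.

Lemma modsub0 p j x : (x < p)%N -> (j < p)%N -> (((j + (p - x)) %% p == 0) = (j == x))%N.
Proof.
move=> xp jp; case: (leqP x j) => xj.
  rewrite addnBA ?(ltnW xp) // addnC -addnBA // modnDl modn_small ?subn_eq0; last first.
    by apply: leq_ltn_trans (leq_subr _ _) jp.
  by rewrite eqn_leq xj andbT.
rewrite modn_small; last by lia.
by rewrite (ltn_eqF xj) addn_eq0 subn_eq0 leqNgt xp andbF.
Qed.

Lemma hval m (g : {unit 'Z_(m.+2)}) k :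
  nat_of_ord (val (g ^+ k)%g) = ((nat_of_ord (val g)) ^ k %% m.+2)%N.
Proof. by rewrite unit_Zp_expg. Qed.

Lemma order_g m (hp : prime m.+2) (g : {unit 'Z_(m.+2)})
  (hg : generator (units_Zp m.+2) g) : #[g]%g = m.+1.
Proof.
by rewrite orderE -(eqP hg) card_units_Zp // totient_prime.
Qed.

Lemma h_neq0 m (g : {unit 'Z_(m.+2)}) k :
  ((nat_of_ord (val g)) ^ k %% m.+2 != 0)%N.
Proof.
rewrite -hval; apply/negP => /eqP h0.
have : val (g ^+ k)%g = 0 by apply: val_inj.
move=> e; have := valP (g ^+ k)%g; rewrite e.
by rewrite unitr0.
Qed.

Lemma h_inj m (hp : prime m.+2) (g : {unit 'Z_(m.+2)})
  (hg : generator (units_Zp m.+2) g) k l : (k < m.+1)%N -> (l < m.+1)%N ->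
  ((nat_of_ord (val g)) ^ k %% m.+2 = (nat_of_ord (val g)) ^ l %% m.+2)%N -> k = l.
Proof.
move=> km lm; rewrite -!hval => e.
have : (g ^+ k)%g = (g ^+ l)%g by apply: val_inj; apply: val_inj.
move/eqP; rewrite eq_expg_mod_order order_g // !modn_small //.
by move/eqP.
Qed.

Lemma h_mod m (hp : prime m.+2) (g : {unit 'Z_(m.+2)})
  (hg : generator (units_Zp m.+2) g) k :
  ((nat_of_ord (val g)) ^ k %% m.+2 = (nat_of_ord (val g)) ^ (k %% m.+1) %% m.+2)%N.
Proof. by rewrite -!hval -[in LHS](expg_mod_order g k) (@order_g m hp g hg). Qed.

Lemma oneN_mul (F : comNzRingType) m n (X : 'M[F]_(m.+1, n)) r j :
  ((1 - \matrix_(i, j) ((i != 0 :> nat) && (j == 0 :> nat))%:R) *m X) r j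
  = X r j - (r != 0 :> nat)%:R * X ord0 j.
Proof.
rewrite mulmxBl mul1mx !mxE; congr (_ - _).
rewrite big_ord_recl /= big1 ?addr0; first by rewrite !mxE andbT.
by move=> i _; rewrite !mxE /= andbF mul0r.
Qed.

Lemma main_char (F : fieldType) m (hp : prime m.+2) (g : {unit 'Z_(m.+2)})
  (hg : generator (units_Zp m.+2) g) (al be : F) :
  let G := nat_of_ord (val g) in
  let A : 'M[F]_(m.+2) := \matrix_(i, j) (al + be * (j == ((i * G) %% m.+2)%N :> nat)%:R) in
  char_poly A = ('X - (m.+2%:R * al + be)%:P) * ('X^(m.+1) - (be ^+ m.+1)%:P).
Proof.
move=> G A.
pose h k := (G ^ k %% m.+2)%N.
have hlt k : (h k < m.+2)%N by rewrite ltn_mod.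
pose sf (r : 'I_(m.+2)) : 'I_(m.+2) := if (r == 0 :> nat) then ord0 else inord (h r.-1).
have sfE (r : 'I_m.+2) : (r != 0 :> nat) -> nat_of_ord (sf r) = h r.-1.
  by rewrite /sf => /negPf ->; rewrite inordK.
have sf0 : sf ord0 = ord0 by [].
have sf_inj : injective sf.
  move=> r1 r2; rewrite /sf.
  case: eqP => [r10|r10]; case: eqP => [r20|r20].
  - by move=> _; apply: val_inj; rewrite /= r10 r20.
  - move/(congr1 (@nat_of_ord _)); rewrite inordK //= => /esym/eqP.
    by rewrite (negPf (h_neq0 m g _)).
  - move/(congr1 (@nat_of_ord _)); rewrite inordK //= => /eqP.
    by rewrite (negPf (h_neq0 m g _)).
  move/(congr1 (@nat_of_ord _)); rewrite !inordK // => e.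
  have l1 := ltn_ord r1; have l2 := ltn_ord r2.
  have e2 := @h_inj m hp g hg r1.-1 r2.-1 ltac:(lia) ltac:(lia) e.
  apply: val_inj => /=; lia.
pose s := perm sf_inj.
pose Nmx : 'M[F]_(m.+2) := \matrix_(i, j) ((i != 0 :> nat) && (j == 0 :> nat))%:R.
pose S := (1 - Nmx) *m perm_mx s.
have Su : S \in unitmx.
  rewrite unitmx_mul unitmx_perm andbT unitmxE det_trig.
    rewrite big1 ?unitr1 // => i _; rewrite !mxE eqxx andbC.
    by case: eqP; rewrite /= subr0.
  apply/is_trig_mxP => i j ij; rewrite !mxE.
  have -> : (i == j) = false by apply/eqP => e; move: ij; rewrite e ltnn.
  have -> : (nat_of_ord j == 0)%N = false by apply/eqP; lia.
  by rewrite andbF subrr.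
have s0 : s ord0 = ord0 by rewrite permE.
have SE (r j : 'I_m.+2) : S r j = (s r == j)%:R - ((r != 0 :> nat) && (j == 0 :> nat))%:R.
  rewrite oneN_mul !mxE s0 -[ord0 == j]val_eqE /= [(0 == _)%N]eq_sym; congr (_ - _).
  by rewrite -natrM mulnb.
have SA (r j : 'I_m.+2) : (S *m A) r j = A (s r) j - (r != 0 :> nat)%:R * A ord0 j.
  by rewrite -mulmxA -row_permE oneN_mul !mxE s0.
pose A' := S *m A *m invmx S.
have cpA : char_poly A = char_poly A'.
  by apply: (@sim_char F m.+2 S A A' Su); rewrite /A' mulmxKV.
pose b1' := m.+2%:R * al + be.
pose one := (const_mx 1 : 'cV[F]_(m.+2)).
have Aone : A *m one = b1' *: one.
  apply/matrixP => i k; rewrite !mxE.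
  under eq_bigr do rewrite !mxE mulr1.
  rewrite big_split /= sumr_const card_ord -mulr_sumr.
  rewrite (bigD1 (Ordinal (ltn_pmod (i * G) (ltn0Sn m.+1)))) //= eqxx big1 ?addr0.
    by rewrite /b1' mulr_natl !mulr1.
  by move=> j /negPf; rewrite -val_eqE /= => ->.
have Sone : S *m one = delta_mx ord0 ord0.
  rewrite -mulmxA -row_permE; apply/matrixP => i k; rewrite oneN_mul !mxE (ord1 k) eqxx andbT mulr1.
  have [->|i0] := eqVneq i ord0; first by rewrite /= subr0.
  have -> : (nat_of_ord i != 0)%N by rewrite -val_eqE in i0.
  by rewrite subrr.
have col0 (i : 'I_(m.+2)) : A' i ord0 = (i == ord0)%:R * b1'.
  have : A' *m (S *m one) = b1' *: (S *m one).
    by rewrite /A' (mulmxA _ S) mulmxKV // -mulmxA Aone scalemxAr.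
  rewrite Sone => /(congr1 (fun M : 'cV[F]_(m.+2) => M i ord0)) /=.
  by rewrite -colE !mxE eqxx andbT mulrC.
pose sig (i : 'I_(m.+1)) : 'I_(m.+2) := lift ord0 (Ordinal (ltn_pmod i.+1 (ltn0Sn m))).
have hS1 (i : 'I_(m.+1)) : nat_of_ord (s (lift ord0 i)) = h i.
  by rewrite permE sfE.
have hS2 (i : 'I_(m.+1)) : nat_of_ord (s (sig i)) = ((h i * G) %% m.+2)%N.
  rewrite permE sfE //= /h -(@h_mod m hp g hg).
  by rewrite expnSr modnMml.
have e (i : 'I_(m.+1)) k : (S *m A) (lift ord0 i) k = be * S (sig i) k.
  rewrite SA SE !mxE -[s (sig i) == k]val_eqE /= hS1 hS2 mul0n mod0n.
  rewrite [(_ == nat_of_ord k)%N]eq_sym.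
  case: (k == _ :> nat); case: (k == _ :> nat); rewrite /=; ring.
have lower : row' ord0 (col' ord0 A') = be *: cycmx F m.+1.
  apply/matrixP => i j; rewrite [LHS]mxE [LHS]mxE /A' [LHS]mxE.
  under eq_bigr do rewrite e -mulrA.
  rewrite -mulr_sumr.
  have := mulmxV Su; move/(congr1 (fun M : 'M[F]_(m.+2) => M (sig i) (lift ord0 j))).
  rewrite [LHS]mxE => ->.
  rewrite !mxE (inj_eq (@lift_inj _ ord0)) -val_eqE /= eq_sym.
  done.
rewrite cpA (@char_col0 F m.+1 A' b1' col0) lower char_cyc.
done.
Qed.

Lemma demoivre (R : realType) (t : R) k :
  ((cos t +i* sin t)%C : R[i]) ^+ k = (cos (k%:R * t) +i* sin (k%:R * t))%C.
Proof.
elim: k => [|k IH]; first by rewrite expr0 mul0r cos0 sin0.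
rewrite exprSr IH -addn1 natrD mulrDl mul1r cosD sinD.
simpc. by congr (Complex _ _); ring.
Qed.

Lemma phi_prim (R : realType) n : (0 < n)%N ->
  n.-primitive_root ((cos (2 * pi / n%:R) +i* sin (2 * pi / n%:R))%C : R[i]).
Proof.
move=> n0; apply/andP; split => //; apply/forallP => i; apply/eqP.
rewrite unity_rootE demoivre.
have n0R : (n%:R : R) != 0 by rewrite pnatr_eq0 -lt0n.
have pi0 : (0 : R) < pi := pi_gt0 R.
have [ein|nein] := eqVneq i.+1 n; rewrite ?ein ?eqxx ?(negPf nein).
  have -> : (n%:R * (2 * pi / n%:R) : R) = pi *+ 2.
    by rewrite mulrC divfK // mulr_natl.
  by rewrite cos2pi sin2pi eq_complex /= !eqxx.
have lt : (i.+1 < n)%N by have := ltn_ord i; rewrite leq_eqVlt (negPf nein).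
set x := (i.+1%:R * (2 * pi / n%:R) : R).
have t1 : (i.+1%:R / n%:R : R) < 1.
  by rewrite ltr_pdivrMr ?ltr0n // mul1r ltr_nat.
have t0 : (0 : R) < i.+1%:R / n%:R by rewrite divr_gt0 ?ltr0n.
have xE : x = 2 * pi * (i.+1%:R / n%:R) by rewrite /x; field.
have x0 : 0 < x by rewrite xE; apply: mulr_gt0 => //; apply: mulr_gt0.
have x2 : x < 2 * pi.
  rewrite xE; nra.
apply/negP; rewrite eq_complex /= => /andP[/eqP c1 /eqP s0].
case: (ltgtP x pi) => [xpi|pix|xpi].
- by have := sin_gt0_pi (x:=x); rewrite x0 xpi s0 ltxx => /(_ isT).
- have : 0 < sin (x - pi) by apply: sin_gt0_pi; apply/andP; split; lra.
  have := sinDpi (x - pi); rewrite subrK s0 => /eqP; rewrite eq_sym oppr_eq0 => /eqP ->.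
  by rewrite ltxx.
- by move: c1; rewrite xpi cospi; lra.
Qed.


Theorem mainTheorem10 (R : realType) (p : nat) (hp : prime p)
  (g : {unit 'Z_p}) (hg : generator (units_Zp p) g)
  (b1 b2 : R) (hb12 : b2 <= b1) (hb2 : 0 <= b2) :
  let phi : R[i] :=
    (cos (2 * pi / (p.-1)%:R) +i* sin (2 * pi / (p.-1)%:R))%C in
  exists A : 'M[R]_p,
    (exists a : nat -> R, A = gcirc p (val g : 'Z_p) a) /\
    (forall i j, 0 <= A i j) /\
    char_poly (map_mx (fun x : R => x%:C)%C A) =
      ('X - (b1%:C)%C%:P) * \prod_(k < p.-1) ('X - ((b2%:C)%C * phi ^+ k)%:P).
Proof.
have [m pm] : exists m, p = m.+2.
  by exists p.-2; have := prime_gt1 hp; lia.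
subst p => phi /=.
pose al := (b1 - b2) / m.+2%:R.
pose a k := if k == 0%N then al + b2 else al.
have al0 : 0 <= al by rewrite divr_ge0 ?ler0n // subr_ge0.
have AE : gcirc m.+2 (val g : 'Z_(m.+2)) a =
    \matrix_(i, j) (al + b2 * (j == ((i * nat_of_ord (val g)) %% m.+2)%N :> nat)%:R).
  apply/matrixP => i j; rewrite !mxE /a modsub0 ?ltn_mod //.
  by case: eqP; rewrite ?mulr1 ?mulr0 ?addr0.
exists (gcirc m.+2 (val g : 'Z_(m.+2)) a); split; first by exists a.
split.
  move=> i j; rewrite AE mxE; apply: addr_ge0 => //; apply: mulr_ge0 => //.
rewrite AE.
rewrite -(map_char_poly (real_complex R)).
rewrite (@main_char R m hp g hg al b2).
have -> : m.+2%:R * al + b2 = b1 by rewrite /al; field.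
rewrite (@prod_root _ m.+1 phi (b2%:C)%C (phi_prim R m.+1 (ltn0Sn m))).
rewrite rmorphM /= !rmorphB /= !map_polyXn !map_polyX !map_polyC /= rmorphXn.
done.
Qed.
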